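(* Every strictly convex reflexive monotone ordered Banach space with a closed proper generating cone is both a $\upsilon$-quasi-lattice and a $\mu$-quasi-lattice, and its $\upsilon$- and $\mu$-quasi-suprema coincide.
   Context: An ordered Banach space is a real Banach space $X$ with a proper cone $X_+$ (closed under addition and non-negative scaling, $X_+\cap(-X_+)=\{0\}$); $x\le y$ means $y-x\in X_+$; generating means $X=X_+-X_+$; monotone means $0\le x\le y$ implies $\|x\|\le\|y\|$. Strictly convex: $\|x+y\|=\|x\|+\|y\|$ implies one of $x,y$ is a non-negative multiple of the other. For $A\subseteq X$, $\upsilon(A)$ is the set of upper bounds and $\mu(A)$ the set of minimal upper bounds ($z\in\upsilon(A)$ with $A\le w\le z\Rightarrow w=z$). Let $\sigma_{x,y}(z)=\|z-x\|+\|z-y\|$. $X$ (closed cone) is a $\upsilon$-quasi-lattice (resp. $\mu$-quasi-lattice) if for all $x,y$ the set $\upsilon(\{x,y\})$ (resp. $\mu(\{x,y\})$) is non-empty and contains a unique minimizer of $\sigma_{x,y}$ on it, the $\upsilon$- (resp. $\mu$-) quasi-supremum. *)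

(* Defs.v *)
From HB Require Import structures.
From mathcomp Require Import all_boot all_order all_algebra.
From mathcomp Require Import all_classical all_reals all_analysis.
Set Implicit Arguments. Unset Strict Implicit. Unset Printing Implicit Defensive.
Import Order.TTheory GRing.Theory Num.Theory.
Import numFieldNormedType.Exports.
Local Open Scope classical_set_scope.
Local Open Scope ring_scope.

Section OrderedBanach.
Variables (R : realType) (X : normedModType R).

Definition proper_cone (C : set X) : Prop :=
  [/\ C 0,
      (forall x y, C x -> C y -> C (x + y)),
      (forall (a : R) x, 0 <= a -> C x -> C (a *: x)) &
      (forall x, C x -> C (- x) -> x = 0)].

Definition cle (C : set X) (x y : X) : Prop := C (y - x).

Definition generating (C : set X) : Prop :=
  forall x : X, exists a b, C a /\ C b /\ x = a - b.

Definition monotone_norm (C : set X) : Prop :=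
  forall x y : X, cle C 0 x -> cle C x y -> `|x| <= `|y|.

Definition strictly_convex_space : Prop :=
  forall x y : X, `|x + y| = `|x| + `|y| ->
    (exists2 a : R, 0 <= a & x = a *: y) \/ (exists2 a : R, 0 <= a & y = a *: x).

Definition dual_elt (f : X -> R) : Prop :=
  (forall x y, f (x + y) = f x + f y) /\ (forall (a : R) x, f (a *: x) = a * f x)
  /\ continuous f.

Definition dual_norm (f : X -> R) : R :=
  sup [set `|f x| | x in [set x : X | `|x| <= 1]].

Definition bidual_elt (Phi : (X -> R) -> R) : Prop :=
  (forall f g, dual_elt f -> dual_elt g -> Phi (f \+ g) = Phi f + Phi g) /\
  (forall (a : R) f, dual_elt f -> Phi (fun x => a * f x) = a * Phi f) /\
  (exists M : R, forall f, dual_elt f -> `|Phi f| <= M * dual_norm f).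

Definition reflexive_space : Prop :=
  forall Phi, bidual_elt Phi -> exists x : X, forall f, dual_elt f -> Phi f = f x.

Definition ubounds (C : set X) (x y : X) : set X :=
  [set z | cle C x z /\ cle C y z].

Definition mubounds (C : set X) (x y : X) : set X :=
  [set z | ubounds C x y z /\
           forall w, cle C x w -> cle C y w -> cle C w z -> w = z].

Definition sigma (x y z : X) : R := `|z - x| + `|z - y|.

Definition sigma_min (S : set X) (x y z : X) : Prop :=
  S z /\ forall w, S w -> sigma x y z <= sigma x y w.

Definition quasi_lattice (B : X -> X -> set X) : Prop :=
  forall x y : X, B x y !=set0 /\
    exists z, sigma_min (B x y) x y z /\
              forall z', sigma_min (B x y) x y z' -> z' = z.

Definition upsilon_quasi_lattice (C : set X) := quasi_lattice (ubounds C).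
Definition mu_quasi_lattice (C : set X) := quasi_lattice (mubounds C).

End OrderedBanach.

(* Main.v *)
Require Import Defs.
From HB Require Import structures.
From mathcomp Require Import all_boot all_order all_algebra.
From mathcomp Require Import all_classical all_reals all_analysis.
From mathcomp Require Import lra ring.
Import Order.TTheory GRing.Theory Num.Theory.
Import numFieldNormedType.Exports.
Local Open Scope classical_set_scope.
Local Open Scope ring_scope.

Set Implicit Arguments. Unset Strict Implicit.

Section HahnBanach.
Variables (R : realType) (X : lmodType R).
Variable p : X -> R.
Hypothesis pD : forall a b, p (a + b) <= p a + p b.
Hypothesis pZ : forall (t : R) a, 0 < t -> p (t *: a) <= t * p a.
Variable v0 : X.

Lemma p0 : p 0 = 0.
Proof.
have h1 := pD 0 0; rewrite addr0 in h1.
have h2' : p 0 <= 2^-1 * p 0.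
  have := @pZ 2^-1 0; rewrite scaler0; apply.
  by rewrite invr_gt0.
lra.
Qed.

Lemma pZe (t : R) a : 0 < t -> p (t *: a) = t * p a.
Proof.
move=> t0; apply/eqP; rewrite eq_le pZ //=.
have := @pZ t^-1 (t *: a); rewrite scalerA mulVf ?gt_eqF // scale1r.
rewrite invr_gt0 => /(_ t0) h.
by move: h; rewrite -(ler_pM2l t0) mulrA mulfV ?gt_eqF // mul1r.
Qed.

Lemma pN a : - p a <= p (- a).
Proof. have := pD a (- a); rewrite subrr p0; lra. Qed.

Definition good (G : set (X * R)) :=
  [/\ G (v0, p v0),
   (forall a r b s, G (a, r) -> G (b, s) -> G (a + b, r + s)),
   (forall t a r, G (a, r) -> G (t *: a, t * r)) &
   (forall a r, G (a, r) -> r <= p a)].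

Lemma good_fun G a r s : good G -> G (a, r) -> G (a, s) -> r = s.
Proof.
move=> [_ GD GZ Gp] Ha Hb.
have h1 := Gp _ _ (GD _ _ _ _ Ha (GZ (-1) _ _ Hb)).
have h2 := Gp _ _ (GD _ _ _ _ Hb (GZ (-1) _ _ Ha)).
rewrite scaleN1r subrr p0 in h1 h2; lra.
Qed.


Lemma good_ext G w : good G -> (forall r, ~ G (w, r)) ->
  exists G', good G' /\ G `<` G'.
Proof.
move=> gG Gw; have [G0 GD GZ Gp] := gG.
pose S := [set y | exists d r, G (d, r) /\ y = r - p (d - w)].
have S0 : S !=set0 by exists (p v0 - p (v0 - w)); exists v0, (p v0).
have Sub : forall d r, G (d, r) -> ubound S (p (d + w) - r).
  move=> d r Gdr _ [d' [r' [Gd' ->]]].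
  have := Gp _ _ (GD _ _ _ _ Gdr Gd').
  have := pD (d' - w) (d + w).
  have -> : d' - w + (d + w) = d + d' by rewrite addrACA addNr addr0 addrC.
  lra.
have hS : has_ubound S by exists (p (v0 + w) - p v0); exact: Sub.
pose c := sup S.
have cle : forall d r, G (d, r) -> c <= p (d + w) - r.
  by move=> d r Gdr; apply: ge_sup => //; exact: Sub.
have cge : forall d r, G (d, r) -> r - p (d - w) <= c.
  by move=> d r Gdr; apply: ub_le_sup => //; exists d, r.
pose G' := [set q | exists d r t, G (d, r) /\ q = (d + t *: w, r + t * c)].
exists G'; split.
  split.
  - by exists v0, (p v0), 0; rewrite scale0r mul0r !addr0.
  - move=> a r b s [d1 [r1 [t1 [G1 [-> ->]]]]] [d2 [r2 [t2 [G2 [-> ->]]]]].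
    exists (d1 + d2), (r1 + r2), (t1 + t2); split; first exact: GD.
    by congr pair; rewrite ?scalerDl ?mulrDl addrACA.
  - move=> t a r [d1 [r1 [t1 [G1 [-> ->]]]]].
    exists (t *: d1), (t * r1), (t * t1); split; first exact: GZ.
    by congr pair; rewrite ?scalerDr ?scalerA ?mulrDr ?mulrA.
  - move=> a r [d [r0 [t [Gd [-> ->]]]]].
    have [t0|t0|->] := ltgtP t 0; last first.
    + by rewrite scale0r mul0r !addr0; exact: Gp.
    + have ti : 0 < t^-1 by rewrite invr_gt0.
      have := cle _ _ (GZ t^-1 _ _ Gd).
      rewrite -(ler_pM2l t0) mulrBr mulrA mulfV ?gt_eqF // mul1r.
      rewrite -pZe // scalerDr scalerA mulfV ?gt_eqF // scale1r; lra.
    + have tp : 0 < - t by rewrite oppr_gt0.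
      have := cge _ _ (GZ (- t)^-1 _ _ Gd).
      rewrite -(ler_pM2l tp) mulrBr mulrA mulfV ?gt_eqF // mul1r.
      rewrite -pZe // scalerBr scalerA mulfV ?gt_eqF // scale1r.
      rewrite scaleNr opprK; lra.
split.
  by move=> [d r] Gdr; exists d, r, 0; rewrite scale0r mul0r !addr0.
move=> sub; apply: (Gw c); apply: sub.
have G00 : G (0, 0) by have := GZ 0 _ _ G0; rewrite scale0r mul0r.
by exists 0, 0, 1; split => //; rewrite scale1r mul1r !add0r.
Qed.


Lemma good_line : good [set q | exists t, q = (t *: v0, t * p v0)].
Proof.
split.
- by exists 1; rewrite scale1r mul1r.
- move=> a r b s [t1 [-> ->]] [t2 [-> ->]].
  by exists (t1 + t2); rewrite scalerDl mulrDl.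
- move=> t a r [t1 [-> ->]].
  by exists (t * t1); rewrite scalerA mulrA.
- move=> a r [t [-> ->]].
  have [t0|t0|->] := ltgtP t 0; last by rewrite scale0r mul0r p0.
  + have tp : 0 < - t by rewrite oppr_gt0.
    have -> : t *: v0 = (- t) *: (- v0) by rewrite scaleNr scalerN opprK.
    rewrite pZe //; have := pN v0.
    rewrite -(ler_pM2l tp); lra.
  + by rewrite pZe.
Qed.

Lemma hahn_banach : exists f : X -> R,
  [/\ (forall a b, f (a + b) = f a + f b),
      (forall (t : R) a, f (t *: a) = t * f a),
      (forall a, f a <= p a) & f v0 = p v0].
Proof.
pose P := fun G : set (X * R) => G = set0 \/ good G.
have mem_good : forall F : set (set (X * R)), F `<=` P ->
    forall G q, F G -> G q -> good G.
  move=> F FP G q FG Gq; case: (FP G FG) => // G0.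
  by rewrite G0 in Gq.
have [A [PA Amax]] : exists A, P A /\ forall B, A `<` B -> ~ P B.
  apply: Zorn_bigcup => F FP tot.
  case: (pselect ((\bigcup_(G in F) G) !=set0)) => [[q [G FG Gq]]|h].
    right; have gG := mem_good F FP G q FG Gq.
    split.
    - by exists G => //; case: gG.
    - move=> a r b s [G1 F1 G1a] [G2 F2 G2b].
      have g1 := mem_good F FP _ _ F1 G1a.
      have g2 := mem_good F FP _ _ F2 G2b.
      case: (tot _ _ F1 F2) => sub.
        by exists G2 => //; case: g2 => _ D _ _; apply: D => //; exact: sub.
      by exists G1 => //; case: g1 => _ D _ _; apply: D => //; exact: sub.
    - move=> t a r [G1 F1 G1a].
      have g1 := mem_good F FP _ _ F1 G1a.
      by exists G1 => //; case: g1 => _ _ Z _; exact: Z.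
    - move=> a r [G1 F1 G1a].
      have g1 := mem_good F FP _ _ F1 G1a.
      by case: g1 => _ _ _ Pp; exact: Pp.
  left; apply/seteqP; split => // q Uq; exfalso; apply: h; by exists q.
have gA : good A.
  case: PA => // A0; exfalso.
  apply: (Amax _ _ (or_intror good_line)); rewrite A0; split => //.
  move=> /(_ (v0, p v0)); apply; by exists 1; rewrite scale1r mul1r.
have dom : forall w, exists r, A (w, r).
  move=> w; apply: contrapT => h.
  have Aw : forall r, ~ A (w, r) by move=> r Ar; apply: h; exists r.
  have [G' [gG' AG']] := good_ext gA Aw.
  by case: (Amax G' AG'); right.
have [f hf] := choice dom.
have [A0 AD AZ Ap] := gA.
exists f; split.
- move=> a b; apply: (good_fun gA (hf (a + b))).
  exact: AD.
- move=> t a; apply: (good_fun gA (hf (t *: a))); exact: AZ.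
- by move=> a; apply: Ap.
- exact: (good_fun gA (hf v0)).
Qed.

End HahnBanach.

Section Dual.
Variables (R : realType) (X : normedModType R).

Lemma lip1_cont (f : X -> R) :
  (forall a b, f (a + b) = f a + f b) -> (forall a, `|f a| <= `|a|) ->
  continuous f.
Proof.
move=> fD fb x; apply/cvgrPdist_lt => e e0; near=> y.
have -> : f x - f y = f (x - y).
  by apply/eqP; rewrite subr_eq -fD subrK.
apply: (le_lt_trans (fb _)); near: y.
apply/nbhs_normP; by exists e.
Unshelve. all: by end_near. Qed.

Lemma hb_dual (p : X -> R) (v0 : X) :
  (forall a b, p (a + b) <= p a + p b) ->
  (forall (t : R) a, 0 < t -> p (t *: a) <= t * p a) ->
  (forall a, p a <= `|a|) ->
  exists f, [/\ dual_elt f, (forall a, f a <= p a) & f v0 = p v0].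
Proof.
move=> pD pZ pn.
have [f [fD fZ fp fv]] := hahn_banach pD pZ v0.
exists f; split => //; split => //; split => //.
apply: lip1_cont => // a; rewrite ler_norml; apply/andP; split.
  have := fZ (-1) a; rewrite scaleN1r mulN1r => h.
  have := fp (- a); rewrite h => h'.
  have := pn (- a); rewrite normrN; lra.
by apply: le_trans (fp a) (pn a).
Qed.

Lemma dualN (f : X -> R) a : dual_elt f -> f (- a) = - f a.
Proof. by move=> [_ [fZ _]]; rewrite -scaleN1r fZ mulN1r. Qed.

Lemma dualB (f : X -> R) a b : dual_elt f -> f (a - b) = f a - f b.
Proof. by move=> df; have [fD _] := df; rewrite fD dualN. Qed.

Lemma dual0 (f : X -> R) : dual_elt f -> f 0 = 0.
Proof. by move=> df; have := dualB 0 0 df; rewrite subrr => ->; rewrite subrr. Qed.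

Lemma dual_ub (f : X -> R) : dual_elt f ->
has_ubound [set `|f x| | x in [set x : X | `|x| <= 1]].
Proof.
move=> df; have [fD [fZ fc]] := df.
have : f @ (0 : X) --> f 0 := fc 0; rewrite (dual0 df).
move=> /cvgrPdist_lt /(_ 1 ltr01) /nbhs_normP [d /= d0 hd].
exists (2 / d) => _ [x /= x1 <-].
have hx : `|0 - (d / 2) *: x| < d.
  rewrite sub0r normrN normrZ ger0_norm ?divr_ge0 ?ltW //.
  have : d / 2 * `|x| <= d / 2 by rewrite -[leRHS]mulr1; apply: ler_wpM2l => //; rewrite divr_ge0 ?ltW.
  have : d / 2 < d by rewrite ltr_pdivrMr // ltr_pMr // ltr1n.
  lra.
have d2 : 0 < d / 2 by rewrite divr_gt0.
have := hd _ hx; rewrite /= sub0r normrN fZ normrM (ger0_norm (ltW d2)) => h.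
rewrite -(ler_pM2l d2) (_ : d / 2 * (2 / d) = 1); first exact: ltW.
by field; rewrite gt_eqF.
Qed.

Lemma dual_norm_ge0 (f : X -> R) : dual_elt f -> 0 <= dual_norm f.
Proof.
move=> df; apply: le_trans (normr_ge0 (f 0)) _.
by apply: ub_le_sup; [exact: dual_ub | exists 0 => //=; rewrite normr0].
Qed.

Lemma dual_bound (f : X -> R) : dual_elt f ->
  forall v, `|f v| <= dual_norm f * `|v|.
Proof.
move=> df; have [fD [fZ fc]] := df.
pose E := [set `|f x| | x in [set x : X | `|x| <= 1]].
have hE : has_ubound E by exact: dual_ub.
have E0 : E `|f 0| by exists 0 => //=; rewrite normr0.
move=> v; have [->|v0] := eqVneq v 0.
  by rewrite (dual0 df) !normr0 mulr0.
have nv : 0 < `|v| by rewrite normr_gt0.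
have -> : v = `|v| *: (`|v|^-1 *: v) by rewrite scalerA divff ?gt_eqF // scale1r.
have nu : `| `|v|^-1 *: v| = 1.
  by rewrite normrZ normrV ?unitfE ?gt_eqF // normr_id mulVf ?gt_eqF.
rewrite fZ normrM normrZ normr_id nu mulr1 mulrC ler_pM2r //.
by apply: ub_le_sup => //; exists (`|v|^-1 *: v) => //=; rewrite nu.
Qed.


Lemma norming v : exists f : X -> R, [/\ dual_elt f, (forall a, f a <= `|a|) & f v = `|v|].
Proof.
apply: (hb_dual (p := fun a : X => `|a|) v) => //.
- by move=> a b; exact: ler_normD.
- by move=> t a t0; rewrite normrZ (ger0_norm (ltW t0)).
Qed.

Section Cone.
Variable C : set X.
Hypothesis pC : proper_cone C.
Hypothesis cC : closed C.

Definition dC (v : X) := inf [set `|v - c| | c in C].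

Let C0 : C 0. Proof. by case: pC. Qed.
Let CD : forall a b, C a -> C b -> C (a + b). Proof. by case: pC. Qed.
Let CZ : forall (t : R) a, 0 <= t -> C a -> C (t *: a). Proof. by case: pC. Qed.

Lemma dC_le v c : C c -> dC v <= `|v - c|.
Proof.
move=> Cc; apply: ge_inf; last by exists c.
by exists 0 => _ [? _ <-].
Qed.

Lemma dC_ge0 v : 0 <= dC v.
Proof. by apply: lb_le_inf; [exists `|v - 0|, 0 | move=> _ [? _ <-]]. Qed.

Lemma dC_norm v : dC v <= `|v|.
Proof. by have := dC_le v C0; rewrite subr0. Qed.

Lemma dC_C c : C c -> dC c = 0.
Proof.
move=> Cc; apply/eqP; rewrite eq_le dC_ge0 andbT.
by have := dC_le c Cc; rewrite subrr normr0.
Qed.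

Lemma dC_D a b : dC (a + b) <= dC a + dC b.
Proof.
have ne : forall v, [set `|v - c| | c in C] !=set0 by move=> v; exists `|v - 0|, 0.
suff : dC (a + b) - dC b <= dC a by lra.
apply: lb_le_inf => // _ [c1 C1 <-].
suff : dC (a + b) - `|a - c1| <= dC b by lra.
apply: lb_le_inf => // _ [c2 C2 <-].
have := dC_le (a + b) (CD C1 C2).
have -> : a + b - (c1 + c2) = (a - c1) + (b - c2) by rewrite opprD addrACA.
have := ler_normD (a - c1) (b - c2); lra.
Qed.

Lemma dC_Z (t : R) a : 0 < t -> dC (t *: a) <= t * dC a.
Proof.
move=> t0; rewrite mulrC -ler_pdivrMr //.
apply: lb_le_inf; first by exists `|a - 0|, 0.
move=> _ [c Cc <-]; rewrite ler_pdivrMr // mulrC.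
have := dC_le (t *: a) (CZ (ltW t0) Cc).
by rewrite -scalerBr normrZ (ger0_norm (ltW t0)).
Qed.

Lemma dC_pos v : ~ C v -> 0 < dC v.
Proof.
move=> nCv; rewrite lt_neqAle dC_ge0 andbT; apply/negP => /eqP d0.
apply: nCv; apply: cC => B /nbhs_normP [e /= e0 hB].
have [_ [c Cc <-] hc] : exists2 r, [set `|v - c| | c in C] r & r < dC v + e.
  apply: inf_adherent => //; split; first by exists `|v - 0|, 0.
  by exists 0 => _ [? _ <-].
exists c; split => //; apply: hB; rewrite /= -d0 add0r in hc; exact: hc.
Qed.

Lemma cone_sep v : ~ C v ->
  exists f : X -> R, [/\ dual_elt f, (forall c, C c -> f c <= 0) & 0 < f v].
Proof.
move=> nCv; have [f [df fp fv]] := hb_dual v dC_D dC_Z dC_norm.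
exists f; split => //; last by rewrite fv; exact: dC_pos.
by move=> c Cc; have := fp c; rewrite dC_C.
Qed.

End Cone.
End Dual.

Lemma ultra_nat : exists G : set_system nat, UltraFilter G /\ \oo `<=` G.
Proof. exact: ultraFilterLemma. Qed.

Lemma ultra_lim (R : realType) (G : set_system nat) (a : nat -> R) (b : R) :
  UltraFilter G -> (forall n, `|a n| <= b) -> exists l : R, a @ G --> l.
Proof.
move=> UG ab.
have FA : (a @ G) `[- b, b]%classic.
  rewrite /fmap /=; apply: filterE => n /=.
  by rewrite in_itv /= -ler_norml ab.
have [l [_ cl]] := segment_compact _ FA.
exists l => V Vl; rewrite /fmap /=.
case: (in_ultra_setVsetC (a @^-1` V) UG) => // hC.
have : (a @ G) (~` V) by [].
move=> /(cl _ V) /(_ Vl) [q [nq Vq]]; exfalso; exact: nq.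
Qed.

Lemma lim_le (R : realType) (G : set_system nat) {FG : ProperFilter G}
  (a : nat -> R) (l c : R) :
  a @ G --> l -> (\forall n \near G, a n <= c) -> l <= c.
Proof. by move=> hl H; exact: (closed_cvg (fun r => r <= c) (@closed_le _ c) H l hl). Qed.

Lemma lim_ge (R : realType) (G : set_system nat) {FG : ProperFilter G}
  (a : nat -> R) (l c : R) :
  a @ G --> l -> (\forall n \near G, c <= a n) -> c <= l.
Proof. by move=> hl H; exact: (closed_cvg (fun r => c <= r) (@closed_ge _ c) H l hl). Qed.

Section Main.
Variables (R : realType) (X : normedModType R).

Lemma exists_min (C : set X) (x y : X) :
  proper_cone C -> closed C -> generating C -> reflexive_space X ->
  exists z, sigma_min (ubounds C x y) x y z.
Proof.
move=> pC cC gC refl.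
have [C0 CD CZ Canti] := pC.
pose U := ubounds C x y.
have Une : exists w, U w.
  have [a [b [Ca [Cb e]]]] := gC (x - y).
  exists (x + b); split; rewrite /cle.
    by rewrite addrAC subrr add0r.
  by rewrite addrAC e subrK.
pose S := [set sigma x y w | w in U].
have hS : has_inf S.
  split; first by have [w Uw] := Une; exists (sigma x y w), w.
  by exists 0 => _ [w _ <-]; rewrite /sigma addr_ge0.
pose s := inf S.
have sle : forall w, U w -> s <= sigma x y w.
  by move=> w Uw; apply: ge_inf; [case: hS | exists w].
have : forall n : nat, exists w, U w /\ sigma x y w < s + n.+1%:R^-1.
  move=> n; have np : 0 < n.+1%:R^-1 :> R by rewrite invr_gt0.
  have [_ [w Uw <-] h] := inf_adherent np hS.
  by exists w.
move=> /choice [u hu].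
pose B := s + 1 + `|x|.
have uB : forall n, `|u n| <= B.
  move=> n; have [_ h] := hu n.
  have h1 : n.+1%:R^-1 <= 1 :> R by rewrite invf_le1 // ler1n.
  have h2 := ler_normD (u n - x) x; rewrite subrK in h2.
  have h3 := normr_ge0 (u n - y).
  rewrite /sigma in h; rewrite /B; apply: (le_trans h2); rewrite lerD2r.
  apply: le_trans (_ : `|u n - x| <= `|u n - x| + `|u n - y|) _; first by rewrite lerDl.
  apply: ltW; apply: (lt_le_trans h); by rewrite lerD2l.
have [G [UG oG]] := ultra_nat.
pose Phi := fun f : X -> R => lim ((fun n => f (u n)) @ G).
have fuB : forall f, dual_elt f -> forall n, `|f (u n)| <= dual_norm f * B.
  move=> f df n; apply: le_trans (dual_bound df (u n)) _.
  by apply: ler_wpM2l; [exact: dual_norm_ge0 | exact: uB].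
have PhiP : forall f, dual_elt f -> (fun n => f (u n)) @ G --> Phi f.
  move=> f df; have [l hl] := ultra_lim UG (fuB f df).
  by rewrite /Phi (cvg_lim _ hl).
have bid : bidual_elt Phi.
  split; [|split].
  - move=> f g df dg; apply: cvg_lim => //.
    exact: (cvgD (PhiP f df) (PhiP g dg)).
  - move=> a f df; apply: cvg_lim => //.
    by apply: cvgMl_tmp; exact: PhiP.
  - exists B => f df; rewrite ler_norml; apply/andP; split.
    + apply: (lim_ge (PhiP f df)); apply: filterE => n /=.
      have := fuB f df n; rewrite ler_norml mulrC => /andP[] //.
    + apply: (lim_le (PhiP f df)); apply: filterE => n /=.
      have := fuB f df n; rewrite ler_norml mulrC => /andP[] //.
have [z hz] := refl Phi bid.
have inC : forall v, (forall f, dual_elt f -> (forall c, C c -> f c <= 0) ->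
    f v <= 0) -> C v.
  move=> v H; apply: contrapT => nC.
  have [f [df fC fv]] := cone_sep pC cC nC.
  have := H f df fC; lra.
have Uz : U z.
  split; apply: inC => f df fC; rewrite dualB // -hz //.
    suff : Phi f <= f x by lra.
    apply: (lim_le (PhiP f df)); apply: filterE => n /=.
    have := fC _ (proj1 (proj1 (hu n))); rewrite dualB //; lra.
  suff : Phi f <= f y by lra.
  apply: (lim_le (PhiP f df)); apply: filterE => n /=.
  have := fC _ (proj2 (proj1 (hu n))); rewrite dualB //; lra.
have sz : sigma x y z <= s.
  apply/ler_addgt0Pr => e e0.
  have [f1 [d1 f1n f1z]] := norming (z - x).
  have [f2 [d2 f2n f2z]] := norming (z - y).
  have dg : dual_elt (f1 \+ f2).
    have [D1 [Z1 c1]] := d1; have [D2 [Z2 c2]] := d2.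
    split; [|split].
    - by move=> a b /=; rewrite D1 D2 addrACA.
    - by move=> a b /=; rewrite Z1 Z2 mulrDr.
    - by move=> a; apply: continuousD; [exact: c1 | exact: c2].
  have : Phi (f1 \+ f2) <= s + e + f1 x + f2 y.
    apply: (lim_le (PhiP _ dg)).
    apply: oG; have := near_infty_natSinv_lt (PosNum e0).
    apply: filterS => n /= hn.
    have [_ h] := hu n.
    have := f1n (u n - x); rewrite (dualB _ _ d1).
    have := f2n (u n - y); rewrite (dualB _ _ d2).
    rewrite /sigma in h.
    have h5 : `|u n - x| + `|u n - y| <= s + e.
      by apply: ltW; apply: (lt_trans h); rewrite ltrD2l.
    clear h hn; lra.
  rewrite hz // /= /sigma -f1z -f2z (dualB _ _ d1) (dualB _ _ d2); lra.
exists z; split => // w Uw; exact: le_trans sz (sle w Uw).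
Qed.

End Main.

Section Uniq.
Variables (R : realType) (X : normedModType R) (C : set X).
Hypothesis pC : proper_cone C.
Hypothesis sc : strictly_convex_space X.

Lemma collin (p1 p2 : X) : `|p1 + p2| = `|p1| + `|p2| ->
  exists (c : R) (e : X), [/\ C e -> C p2 -> C p1 -> True,
    p1 - p2 = c *: e, `|p1| - `|p2| = c * `|e| & (C p1 -> C p2 -> C e)].
Proof.
move=> /sc [[a a0 ->]|[a a0 ->]].
  exists (a - 1), p2; split => //.
  - by rewrite scalerBl scale1r.
  - by rewrite normrZ ger0_norm // mulrBl mul1r.
exists (1 - a), p1; split => //.
- by rewrite scalerBl scale1r.
- by rewrite normrZ ger0_norm // mulrBl mul1r.
Qed.

Lemma half_sub (a b x : X) :
  2^-1 *: (a + b) - x = 2^-1 *: ((a - x) + (b - x)).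
Proof.
rewrite addrACA -opprD [in RHS]scalerDr [in RHS]scalerN; congr (_ - _).
rewrite -[x + x]/(x *+ 2) -scalerMnr scalerMnl (_ : 2^-1 *+ 2 = 1) ?scale1r //.
by rewrite mulr2n; field.
Qed.

Lemma uniq_min (x y z1 z2 : X) :
  sigma_min (ubounds C x y) x y z1 -> sigma_min (ubounds C x y) x y z2 ->
  z1 = z2.
Proof.
have [C0 CD CZ Canti] := pC.
move=> [[h1x h1y] m1] [[h2x h2y] m2].
rewrite /cle in h1x h1y h2x h2y.
have e12 := m1 z2 (conj h2x h2y); have e21 := m2 z1 (conj h1x h1y).
pose m := 2^-1 *: (z1 + z2).
have h2 : 0 <= 2^-1 :> R by rewrite invr_ge0.
have Um : ubounds C x y m.
  by split; rewrite /cle /m half_sub; apply: CZ => //; apply: CD.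
have em := m1 m Um.
move: e12 e21 em; rewrite /sigma /m !half_sub !normrZ (ger0_norm h2).
move=> e12 e21 em.
have t1 := ler_normD (z1 - x) (z2 - x).
have t2 := ler_normD (z1 - y) (z2 - y).
have ex : `|z1 - x + (z2 - x)| = `|z1 - x| + `|z2 - x| by lra.
have ey : `|z1 - y + (z2 - y)| = `|z1 - y| + `|z2 - y| by lra.
have [c [e [_ dx nx ce]]] := collin ex.
have [c' [e' [_ dy ny ce']]] := collin ey.
have Ce := ce h1x h2x; have Ce' := ce' h1y h2y.
have dxy : z1 - x - (z2 - x) = z1 - z2 by rewrite opprB addrA subrK.
have dyy : z1 - y - (z2 - y) = z1 - z2 by rewrite opprB addrA subrK.
rewrite dxy in dx; rewrite dyy in dy.
have sum0 : c * `|e| + c' * `|e'| = 0 by lra.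
apply/eqP; rewrite -subr_eq0; apply/eqP.
have ne := normr_ge0 e; have ne' := normr_ge0 e'.
have e'0 : (0 <= c) = (0 <= c') -> 0 < c' \/ c' < 0 -> z1 - z2 = 0.
  move=> sgn hc'.
  suff /normr0_eq0 e0 : `|e'| = 0 by rewrite dy e0 scaler0.
  case: hc' => hc'.
    have hc : 0 <= c by rewrite sgn ltW.
    nra.
  have hc : c < 0 by rewrite ltNge sgn -ltNge.
  nra.
have [c0|c0] := leP 0 c; have [c'0|c'0] := leP 0 c'.
- have [c'e|c'p] := eqVneq c' 0; first by rewrite dy c'e scale0r.
  apply: e'0; first by rewrite c0 c'0.
  by left; rewrite lt_neqAle eq_sym c'p.
- apply: Canti; first by rewrite dx; exact: CZ.
  by rewrite dy -scaleNr; apply: CZ => //; rewrite oppr_ge0 ltW.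
- apply: Canti; first by rewrite dy; exact: CZ.
  by rewrite dx -scaleNr; apply: CZ => //; rewrite oppr_ge0 ltW.
- apply: e'0; last by right.
  by rewrite !leNgt c0 c'0.
Qed.

End Uniq.

Unset Implicit Arguments. Set Strict Implicit.

Theorem corollary6p2 (R : realType) (X : completeNormedModType R) (C : set X) :
  proper_cone C -> closed C -> generating C -> monotone_norm C ->
  strictly_convex_space X -> reflexive_space X ->
  [/\ upsilon_quasi_lattice C, mu_quasi_lattice C &
      forall (x y zu zm : X),
        sigma_min (ubounds C x y) x y zu ->
        sigma_min (mubounds C x y) x y zm -> zu = zm].
Proof.
move=> pC cC gC mC sC rX.
have key : forall x y, exists z, [/\ sigma_min (ubounds C x y) x y z,
    sigma_min (mubounds C x y) x y z,
    (forall z', sigma_min (ubounds C x y) x y z' -> z' = z) &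
    (forall z', sigma_min (mubounds C x y) x y z' -> z' = z)].
  move=> x y; have [z zm] := exists_min x y pC cC gC rX.
  have uU : forall z', sigma_min (ubounds C x y) x y z' -> z' = z.
    by move=> z' h; exact: (uniq_min pC sC h zm).
  have [Uz mz] := zm.
  have Mz : mubounds C x y z.
    split => // w xw yw wz; apply: uU; split; first by split.
    move=> v Uv; apply: le_trans (mz v Uv).
    rewrite /sigma; apply: lerD; apply: mC; rewrite /cle ?subr0 //.
    - by rewrite opprB addrA subrK.
    - by rewrite opprB addrA subrK.
  exists z; split => //.
  - by split => // w [Uw _]; exact: mz.
  - move=> z' [[Uz' _] m']; apply: uU; split => // v Uv.
    exact: le_trans (m' z Mz) (mz v Uv).
split.
- move=> x y; have [z [zu _ uU _]] := key x y.
  split; first by exists z; case: zu.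
  by exists z.
- move=> x y; have [z [_ zm _ uM]] := key x y.
  split; first by exists z; case: zm.
  by exists z.
- move=> x y zu zm hu hm; have [z [_ _ uU uM]] := key x y.
  by rewrite (uU _ hu) (uM _ hm).
Qed.
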